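(* Let $z\in\mathbb{R}_{\ge0}^s$ with $\sum_j z_j>0$, $\eta>0$, and indices $k,k'$ with $0<z_k<z_{k'}$. Then $\eta\frac{\partial\mathcal{H}}{\partial z_k}(z)>\eta\frac{\partial\mathcal{H}}{\partial z_{k'}}(z)$. Consequently, with $\tilde z_j=\max\big(z_j-\eta\frac{\partial\mathcal{H}}{\partial z_j}(z),0\big)$, mass order is preserved, $\tilde z_k\le\tilde z_{k'}$, and the unclipped gap widens: $\big(z_{k'}-\eta\frac{\partial\mathcal{H}}{\partial z_{k'}}(z)\big)-\big(z_k-\eta\frac{\partial\mathcal{H}}{\partial z_k}(z)\big)>z_{k'}-z_k$.
   Context: $\mathcal{H}(z)=-\sum_i \frac{z_i}{\sum_j z_j}\log\frac{z_i}{\sum_j z_j}$ with $0\log0=0$; $\frac{\partial\mathcal{H}}{\partial z_j}$ is the partial derivative (for $z_j>0$). *)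

(* Defs.v *)
From mathcomp Require Import all_boot all_order all_algebra.
From mathcomp Require Import all_classical all_reals all_analysis.
Set Implicit Arguments. Unset Strict Implicit. Unset Printing Implicit Defensive.
Import Order.TTheory GRing.Theory Num.Theory.
Local Open Scope ring_scope.

Definition xlnx {R : realType} (p : R) : R := if p == 0 then 0 else p * ln p.

Definition entropyH {R : realType} {s : nat} (z : 'I_s -> R) : R :=
  - \sum_(i < s) xlnx (z i / \sum_(j < s) z j).

Definition upd {R : realType} {s : nat} (z : 'I_s -> R) (j : 'I_s) (x : R) : 'I_s -> R :=
  fun i => if i == j then x else z i.

Definition dH {R : realType} {s : nat} (z : 'I_s -> R) (j : 'I_s) : R :=
  derive1 (fun x : R => entropyH (upd z j x)) (z j).

(* Main.v *)
Require Import Defs.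
From mathcomp Require Import all_boot all_order all_algebra.
From mathcomp Require Import all_classical all_reals all_analysis.
From mathcomp Require Import ring lra.
Import Order.TTheory GRing.Theory Num.Theory.
Local Open Scope ring_scope.

Lemma deriv_g (R : realType) (c d x : R) : 0 < x -> 0 < c + x ->
  'D_1 (fun y => ln (c + y) - (d + y * ln y) * (c + y)^-1) x =
  (d + x * ln x) / (c + x) ^+ 2 - ln x / (c + x).
Proof.
move=> x0 cx0.
have h1 : is_derive x 1 (fun y : R => c + y) (0 + 1).
  exact: (@is_deriveD _ _ _ (cst c) id).
have h2 : is_derive x 1 (fun y : R => ln (c + y)) ((c + x)^-1 * (0 + 1)).
  exact: (@is_derive1_comp _ (@ln R) (fun y => c + y) x _ _ (is_derive1_ln cx0) h1).
have h3 := is_deriveM (is_derive_id x (1:R)) (is_derive1_ln x0).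
have h4 := is_deriveD (is_derive_cst d x (1:R)) h3.
have h5 := is_deriveV (lt0r_neq0 cx0) h1.
have h6 := is_deriveM h4 h5.
have h7 := is_deriveB h2 h6.
case: h7 => _ E.
apply: (etrans E).
rewrite /cst /= !add0r !mulr1.
rewrite -![_ *: _]/(_ * _).
rewrite mulfV ?gt_eqF //.
rewrite (_ : ((fun=> d) + id * (@ln R)) x = d + x * ln x) //.
field. by rewrite gt_eqF.
Qed.

Lemma xlnx_div (R : realType) (w S : R) : 0 <= w -> 0 < S ->
  xlnx (w / S) = xlnx w / S - w / S * ln S.
Proof.
move=> w0 S0; rewrite /xlnx.
have [->|wn0] := eqVneq w 0; first by rewrite !mul0r eqxx; lra.
have wp : 0 < w by rewrite lt_neqAle eq_sym wn0.
rewrite mulf_eq0 invr_eq0 (negbTE wn0) gt_eqF //=.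
rewrite ln_div ?posrE //; field; rewrite gt_eqF //.
Qed.

Lemma entropy_upd (R : realType) (s : nat) (z : 'I_s -> R) (j : 'I_s) (x : R) :
  (forall i, 0 <= z i) -> 0 < x ->
  entropyH (upd z j x) =
  ln ((\sum_(i < s) z i - z j) + x) -
  ((\sum_(i < s) xlnx (z i) - xlnx (z j)) + x * ln x) * ((\sum_(i < s) z i - z j) + x)^-1.
Proof.
move=> z0 x0.
have Sw : \sum_(i < s) upd z j x i = (\sum_(i < s) z i - z j) + x.
  rewrite (bigD1 j) //= [in RHS](bigD1 j) //= /upd eqxx.
  rewrite (eq_bigr (fun i => z i)); last by move=> i /negbTE ->.
  ring.
have Tw : \sum_(i < s) xlnx (upd z j x i) = (\sum_(i < s) xlnx (z i) - xlnx (z j)) + x * ln x.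
  rewrite (bigD1 j) //= [in RHS](bigD1 j) //= /upd eqxx.
  rewrite (eq_bigr (fun i => xlnx (z i))); last by move=> i /negbTE ->.
  rewrite {1}/xlnx gt_eqF //; ring.
have c0 : 0 <= \sum_(i < s) z i - z j.
  rewrite (bigD1 j) //= addrAC subrr add0r; apply: sumr_ge0 => i _; exact: z0.
have Sp : 0 < (\sum_(i < s) z i - z j) + x by lra.
have w0 : forall i, 0 <= upd z j x i by move=> i; rewrite /upd; case: ifP => _; [exact: ltW|exact: z0].
rewrite /entropyH Sw.
rewrite (eq_bigr (fun i => xlnx (upd z j x i) / ((\sum_(i < s) z i - z j) + x)
   - upd z j x i / ((\sum_(i < s) z i - z j) + x) * ln ((\sum_(i < s) z i - z j) + x))); last first.
  by move=> i _; rewrite xlnx_div.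
rewrite sumrB -!mulr_suml Tw Sw mulfV ?gt_eqF //; ring.
Qed.

Lemma dH_formula (R : realType) (s : nat) (z : 'I_s -> R) (j : 'I_s) :
  (forall i, 0 <= z i) -> 0 < z j ->
  dH z j = (\sum_(i < s) xlnx (z i)) / (\sum_(i < s) z i) ^+ 2
           - ln (z j) / \sum_(i < s) z i.
Proof.
move=> z0 zj0.
set c := \sum_(i < s) z i - z j.
set d := \sum_(i < s) xlnx (z i) - xlnx (z j).
have c0 : 0 <= c.
  rewrite /c (bigD1 j) //= addrAC subrr add0r; apply: sumr_ge0 => i _; exact: z0.
rewrite /dH derive1E.
rewrite (@near_eq_derive _ _ _ _ (fun y => ln (c + y) - (d + y * ln y) * (c + y)^-1)); last first.
  near=> y; rewrite entropy_upd //; near: y; exact: lt_nbhsr.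
rewrite deriv_g //; last by lra.
have -> : c + z j = \sum_(i < s) z i by rewrite /c; ring.
have -> : d + z j * ln (z j) = \sum_(i < s) xlnx (z i) by rewrite /d /xlnx gt_eqF //; ring.
by [].
Unshelve. all: by end_near.
Qed.

Theorem corollary4 (R : realType) (s : nat) (z : 'I_s -> R) (eta : R) (k k' : 'I_s) :
  (forall j, 0 <= z j) -> 0 < \sum_(j < s) z j -> 0 < eta ->
  0 < z k -> z k < z k' ->
  [/\ eta * dH z k > eta * dH z k',
      Num.max (z k - eta * dH z k) 0 <= Num.max (z k' - eta * dH z k') 0
    & (z k' - eta * dH z k') - (z k - eta * dH z k) > z k' - z k].
Proof.
move=> z0 S0 e0 zk0 zkk.
have zk'0 : 0 < z k' by lra.
have hd : 0 < dH z k - dH z k'.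
  rewrite !dH_formula // (_ : forall a b c : R, (a - b) - (a - c) = c - b); last by move=> *; ring.
  rewrite -mulrBl.
  apply: divr_gt0 => //; rewrite subr_gt0 ltr_ln ?posrE //.
have h1 : eta * dH z k' < eta * dH z k.
  by rewrite -subr_gt0 -mulrBr mulr_gt0.
have h3 : z k' - z k < (z k' - eta * dH z k') - (z k - eta * dH z k) by lra.
split => //.
have h4 : z k - eta * dH z k <= z k' - eta * dH z k' by lra.
by rewrite ge_max !le_max h4 lexx !orbT.
Qed.
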